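(* Let $L\ge2$ and $0\le p<1$, and let $(\eta_n)_{n\ge0}$ be the Markov chain on $\{0,1\}^L$ with transition function $Q$, started from the stationary distribution $\pi(\omega)=Z^{-1}\prod_{j=0}^{|\omega|-1}c_j/c_{L-j-1}$. Then $$\mathbb E_\pi[\eta_0(0)\eta_1(0)]-\frac14=\frac{2p-1}{4\big(2L(1-p)+2p-1\big)}.$$
   Context: $\Omega=\{0,1\}^L$, $\omega=(\omega(0),\dots,\omega(L-1))$, $|\omega|=\sum_j\omega(j)$. The transition function $Q$ is $Q\big(\eta,(\eta(1),\dots,\eta(L-1),s)\big)=\frac1L\big(|\eta|p+(L-|\eta|)(1-p)\big)$ for $s=1$, $=\frac1L\big((L-|\eta|)p+|\eta|(1-p)\big)$ for $s=0$, and $Q(\eta,\omega)=0$ otherwise. $c_j=(1-p)(1-\frac jL)+\frac jLp$ and $Z$ is a normalizing constant; this $\pi$ is stationary for $Q$. *)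

(* Defs.v *)
From HB Require Import structures.
From mathcomp Require Import all_boot all_order all_algebra.
Set Implicit Arguments. Unset Strict Implicit. Unset Printing Implicit Defensive.
Import Order.TTheory GRing.Theory Num.Theory.
Local Open Scope ring_scope.

Definition config (L : nat) := {ffun 'I_L -> bool}.

(* omega(k) for a natural-number index k (false outside 0..L-1; never used there) *)
Definition at_ (L : nat) (w : config L) (k : nat) : bool :=
  if insub k is Some i then w i else false.

Definition ones (L : nat) (w : config L) : nat := (\sum_(i < L) w i)%N.

Section Chain.
Variable R : realFieldType.

Definition cc (L : nat) (p : R) (j : nat) : R :=
  (1 - p) * (1 - j%:R / L%:R) + j%:R / L%:R * p.

Definition Q (L : nat) (p : R) (eta w : config L) : R :=
  if [forall j : 'I_L, (j.+1 < L)%N ==> (w j == at_ eta j.+1)] then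
    (if at_ w L.-1
     then (L%:R)^-1 * ((ones eta)%:R * p + (L - ones eta)%:R * (1 - p))
     else (L%:R)^-1 * ((L - ones eta)%:R * p + (ones eta)%:R * (1 - p)))
  else 0.

Definition wt (L : nat) (p : R) (w : config L) : R :=
  \prod_(j < ones w) (cc L p j / cc L p (L - j - 1)).

Definition pi (L : nat) (p : R) (w : config L) : R :=
  wt p w / \sum_(v : config L) wt p v.

(* E_pi[eta_0(0) eta_1(0)] for the chain started at pi *)
Definition corr (L : nat) (p : R) : R :=
  \sum_(eta : config L) \sum_(w : config L)
     pi p eta * Q p eta w * (nat_of_bool (at_ eta 0))%:R * (nat_of_bool (at_ w 0))%:R.

End Chain.

(* Main.v *)
Require Import Defs.
From HB Require Import structures.
From mathcomp Require Import all_boot all_order all_algebra ring lra zify.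
Set Implicit Arguments. Unset Strict Implicit. Unset Printing Implicit Defensive.
Import Order.TTheory GRing.Theory Num.Theory.
Local Open Scope ring_scope.

Definition consf (n : nat) (b : bool) (v : config n) : config n.+1 :=
  [ffun i : 'I_n.+1 => if unlift ord0 i is Some j then v j else b].

Lemma consf0 n b (v : config n) : consf b v ord0 = b.
Proof. by rewrite /consf ffunE unlift_none. Qed.

Lemma consfS n b (v : config n) j : consf b v (lift ord0 j) = v j.
Proof. by rewrite /consf ffunE liftK. Qed.

Lemma ones_cons n b (v : config n) : ones (consf b v) = (b + ones v)%N.
Proof.
rewrite /ones big_ord_recl consf0; congr (_ + _)%N.
by apply: eq_bigr => i _; rewrite consfS.
Qed.

Lemma at_E L (w : config L) (i : 'I_L) : at_ w i = w i.
Proof. by rewrite /at_ valK. Qed.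

Lemma sum_cons (R : nmodType) n (F : config n.+1 -> R) :
  \sum_(w : config n.+1) F w = \sum_(b : bool) \sum_(v : config n) F (consf b v).
Proof.
rewrite pair_big /=.
rewrite (reindex (fun bv : bool * config n => consf bv.1 bv.2)) /=; last first.
  exists (fun w : config n.+1 => (w ord0, [ffun j => w (lift ord0 j)])).
    move=> [b v] _ /=; rewrite consf0; congr (_, _).
    by apply/ffunP => j; rewrite ffunE consfS.
  move=> w _; apply/ffunP => i; rewrite /consf ffunE.
  by case: (unliftP ord0 i) => [j ->|->]; rewrite ?ffunE.
by apply: eq_bigl => -[].
Qed.

Lemma count_ones (R : pzSemiRingType) n (h : nat -> R) :
  \sum_(v : config n) h (ones v) = \sum_(k < n.+1) 'C(n, k)%:R * h k.
Proof.
elim: n h => [|n IH] h.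
  rewrite big_ord1 bin0 mul1r.
  rewrite (eq_bigr (fun _ => h 0%N)); last by move=> v _; rewrite /ones big_ord0.
  by rewrite sumr_const card_ffun card_bool card_ord expn0.
rewrite sum_cons big_bool /=.
rewrite (eq_bigr (fun v => h (ones v).+1)); last by move=> v _; rewrite ones_cons.
rewrite [X in _ + X](eq_bigr (fun v => h (ones v))); last by move=> v _; rewrite ones_cons.
rewrite (IH (fun k => h k.+1)) IH.
rewrite [RHS]big_ord_recl /= bin0 mul1r.
rewrite [X in _ = _ + X](eq_bigr (fun i : 'I_n.+1 => 'C(n, i)%:R * h (i.+1) + 'C(n, i.+1)%:R * h (i.+1)));
  last by move=> i _; rewrite /bump /= add1n binS natrD mulrDl addrC.
rewrite big_split /= [X in _ + X = _]big_ord_recl /= bin0 mul1r.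
rewrite [X in _ = _ + (_ + X)]big_ord_recr /= bin_small // mul0r addr0.
rewrite addrCA; congr (_ + _); congr (_ + _).
Qed.

Lemma at_cons0 n b (u : config n) : at_ (consf b u) 0 = b.
Proof. by rewrite (at_E _ ord0) consf0. Qed.

Lemma at_consS n b (u : config n) k : at_ (consf b u) k.+1 = at_ u k.
Proof.
rewrite /at_; case: insubP => [i hi vi|hn]; case: insubP => [j hj vj|hn'] //.
- have -> : i = lift ord0 j by apply: val_inj; rewrite /= vi vj.
  by rewrite consfS.
- by rewrite ltnS in hi; rewrite hi in hn'.
- by rewrite -ltnS in hj; rewrite hj in hn.
Qed.

Lemma sum_pair (R : pzSemiRingType) n (h : nat -> R) :
  \sum_(w : config n.+2) (nat_of_bool (at_ w 0))%:R * (nat_of_bool (at_ w 1))%:R * h (ones w)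
  = \sum_(k < n.+1) 'C(n, k)%:R * h k.+2.
Proof.
rewrite sum_cons big_bool /=.
rewrite [X in _ + X]big1 ?addr0; last by move=> v _; rewrite at_cons0 mul0r mul0r.
rewrite sum_cons big_bool /=.
rewrite [X in _ + X]big1 ?addr0; last by move=> v _; rewrite at_consS !at_cons0 /= mulr0 mul0r.
rewrite -(@count_ones _ n (fun k => h k.+2)) /=.
by apply: eq_bigr => v _; rewrite at_cons0 at_consS at_cons0 !ones_cons /= !mul1r.
Qed.

Lemma ones_le L (w : config L) : (ones w <= L)%N.
Proof.
rewrite /ones; apply: (@leq_trans (\sum_(i < L) 1)%N).
  by apply: leq_sum => i _; apply: leq_b1.
by rewrite sum1_card card_ord.
Qed.

Definition sh n (e : config n.+2) (s : bool) : config n.+2 :=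
  [ffun j : 'I_n.+2 => if (j.+1 < n.+2)%N then at_ e j.+1 else s].

Lemma at_sh_last n (e : config n.+2) s : at_ (sh e s) n.+1 = s.
Proof. by rewrite (at_E _ ord_max) ffunE /= ltnn. Qed.

Lemma sh_neq n (e : config n.+2) : (sh e false == sh e true) = false.
Proof.
apply/negbTE/eqP => h; have := at_sh_last e false; rewrite h at_sh_last //.
Qed.

Lemma Q_dec (R : realFieldType) n (p : R) (e w : config n.+2) :
  Q p e w = if w == sh e true then
     (n.+2%:R)^-1 * ((ones e)%:R * p + (n.+2 - ones e)%:R * (1 - p))
   else if w == sh e false then
     (n.+2%:R)^-1 * ((n.+2 - ones e)%:R * p + (ones e)%:R * (1 - p))
   else 0.
Proof.
rewrite /Q.
have [->|h1] := eqVneq w (sh e true).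
  have -> : [forall j : 'I_n.+2, (j.+1 < n.+2)%N ==> (sh e true j == at_ e j.+1)].
    by apply/forallP => j; apply/implyP => hj; rewrite ffunE hj.
  by rewrite /= at_sh_last.
have [->|h2] := eqVneq w (sh e false).
  have -> : [forall j : 'I_n.+2, (j.+1 < n.+2)%N ==> (sh e false j == at_ e j.+1)].
    by apply/forallP => j; apply/implyP => hj; rewrite ffunE hj.
  by rewrite /= at_sh_last.
case: ifP => // hc; exfalso.
have hw : w = sh e (w ord_max).
  apply/ffunP => j; rewrite ffunE; case: ifP => hj.
    by move/forallP: hc => /(_ j) /implyP /(_ hj) /eqP.
  have -> : j = ord_max.
    apply: val_inj => /=; move: (ltn_ord j) hj; rewrite !ltnS => a b.
    by apply/eqP; rewrite eqn_leq a ltnNge b.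
  by [].
move: hw; case: (w ord_max) => hw.
  by rewrite hw eqxx in h1.
by rewrite hw eqxx in h2.
Qed.

Lemma sum_two (R : pzSemiRingType) (T : finType) (a b : T) (A B : R) (g : T -> R) :
  a != b ->
  \sum_(w : T) (if w == a then A else if w == b then B else 0) * g w = A * g a + B * g b.
Proof.
move=> hab; rewrite (bigD1 a) //= eqxx (bigD1 b) /=; last by rewrite eq_sym.
rewrite eq_sym (negbTE hab) eqxx big1 ?addr0 // => w /andP [hwa hwb].
by rewrite (negbTE hwa) (negbTE hwb) mul0r.
Qed.

Lemma inner (R : realFieldType) n (p : R) (e : config n.+2) :
  \sum_(w : config n.+2) Q p e w * (nat_of_bool (at_ w 0))%:R = (nat_of_bool (at_ e 1))%:R.
Proof.
under eq_bigr => w _ do rewrite Q_dec.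
rewrite sum_two; last by rewrite eq_sym sh_neq.
rewrite !(at_E _ ord0) !ffunE /= -mulrDl.
have hk := ones_le e.
have hL : n.+2%:R != 0 :> R by rewrite pnatr_eq0.
have -> : (n.+2%:R)^-1 * ((ones e)%:R * p + (n.+2 - ones e)%:R * (1 - p)) +
  (n.+2%:R)^-1 * ((n.+2 - ones e)%:R * p + (ones e)%:R * (1 - p)) = 1 :> R.
  rewrite natrB //. field. by rewrite -(natrD R 2 n) pnatr_eq0.
exact: mul1r.
Qed.

Definition ff (R : realFieldType) L (p : R) k : R :=
  \prod_(j < k) (cc L p j / cc L p (L - j - 1)).
Definition nu (R : realFieldType) L (p : R) k : R := 'C(L, k)%:R * ff L p k.

Lemma cc_pos (R : realFieldType) L (p : R) j :
  (0 < L)%N -> 0 <= p -> p < 1 -> (j < L)%N -> 0 < cc L p j.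
Proof.
move=> hL hp0 hp1 hj; rewrite /cc.
have hL' : 0 < L%:R :> R by rewrite ltr0n.
have ht0 : 0 <= j%:R / L%:R :> R by rewrite divr_ge0 ?ler0n // ltW.
have ht1 : j%:R / L%:R < 1 :> R by rewrite ltr_pdivrMr // mul1r ltr_nat.
have h1 : 0 < (1 - p) * (1 - j%:R / L%:R) by rewrite mulr_gt0 // subr_gt0.
have h2 : 0 <= j%:R / L%:R * p by rewrite mulr_ge0.
lra.
Qed.

Lemma ff_S (R : realFieldType) L (p : R) k :
  ff L p k.+1 = ff L p k * (cc L p k / cc L p (L - k - 1)).
Proof. by rewrite /ff big_ord_recr. Qed.

Lemma DB (R : realFieldType) L (p : R) k :
  0 <= p -> p < 1 -> (k < L)%N ->
  nu L p k.+1 * (k.+1%:R * cc L p (L - k - 1)) = nu L p k * ((L - k)%:R * cc L p k).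
Proof.
move=> hp0 hp1 hk.
have hc : cc L p (L - k - 1) != 0.
  have h1 : (L - k - 1 < L)%N by lia.
  have h2 : (0 < L)%N by lia.
  by rewrite gt_eqF // cc_pos.
have hR : k.+1%:R * 'C(L, k.+1)%:R = (L - k)%:R * 'C(L, k)%:R :> R.
  by rewrite -!natrM mul_bin_left.
rewrite /nu ff_S.
rewrite [LHS](_ : _ = (k.+1%:R * 'C(L, k.+1)%:R) * (ff L p k * cc L p k)); last by field.
by rewrite hR; ring.
Qed.

Lemma rel (R : realFieldType) L (p : R) (g : nat -> R) :
  0 <= p -> p < 1 ->
  \sum_(k < L.+1) nu L p k * ((L - k)%:R * cc L p k * (g k.+1 - g k)
     - k%:R * cc L p (L - k) * (g k - g k.-1)) = 0.
Proof.
move=> hp0 hp1.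
under eq_bigr do rewrite mulrBr.
rewrite sumrB; apply/eqP; rewrite subr_eq0; apply/eqP.
rewrite big_ord_recr /= subnn mul0r mul0r mulr0 addr0.
rewrite big_ord_recl /= mul0r mul0r mulr0 add0r.
apply: eq_bigr => i _; rewrite /bump /= add1n.
have := DB hp0 hp1 (ltn_ord i); rewrite -subnDA addn1 => h.
by rewrite add0n [LHS]mulrA [RHS]mulrA h.
Qed.

Lemma lin_sum (R : realFieldType) N (F x y : nat -> R) (al be ga : R) :
  \sum_(k < N) F k * (al + be * x k + ga * y k) =
  al * \sum_(k < N) F k + be * \sum_(k < N) F k * x k + ga * \sum_(k < N) F k * y k.
Proof.
rewrite !mulr_sumr -!big_split /=; apply: eq_bigr => k _; ring.
Qed.

Lemma final_alg (R : realFieldType) n (p S0 S1 S2 N : R) :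
  0 <= p -> p < 1 -> 0 < S0 ->
  (1 - p) * n.+2%:R * S0 + (-2 * (1 - p)) * S1 + 0 * S2 = 0 ->
  (1 - p) * n.+2%:R * S0 + 2 * ((1 - p) * n.+2%:R - (1 - p) + p) * S1
    + ((2 * (1 - p) - 2 * p - 4 * (1 - p) * n.+2%:R) / n.+2%:R) * S2 = 0 ->
  S2 - S1 = n.+2%:R * n.+1%:R * N ->
  N / S0 - 1 / 4 = (2 * p - 1) / (4 * (2 * n.+2%:R * (1 - p) + 2 * p - 1)).
Proof.
move=> hp0 hp1 hS0 E1 E2 E3.
have hn : 0 <= n%:R :> R by rewrite ler0n.
have hn2 : n.+2%:R = n%:R + 2 :> R by rewrite -addn2 natrD.
have hn1 : n.+1%:R = n%:R + 1 :> R by rewrite -addn1 natrD.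
have hnp : 0 <= n%:R * (1 - p) by rewrite mulr_ge0 // subr_ge0 ltW.
have hL : n.+2%:R != 0 :> R by rewrite pnatr_eq0.
have hL1 : n.+1%:R != 0 :> R by rewrite pnatr_eq0.
have hD : 2 * n.+2%:R * (1 - p) + 2 * p - 1 != 0.
  rewrite hn2; apply/lt0r_neq0; lra.
have ha : 1 - p != 0 by apply/lt0r_neq0; lra.
have hS1 : S1 = n.+2%:R * S0 / 2.
  apply: (mulfI ha); rewrite hn2 in E1 *; lra.
set ga := (2 * (1 - p) - 2 * p - 4 * (1 - p) * n.+2%:R) / n.+2%:R in E2 *.
have hga : ga != 0.
  rewrite /ga mulf_neq0 ?invr_eq0 // hn2; apply/ltr0_neq0; lra.
have hS2 : S2 = - ((1 - p) * n.+2%:R * S0 + 2 * ((1 - p) * n.+2%:R - (1 - p) + p) * S1) / ga.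
  apply: (mulfI hga); rewrite mulrCA mulfV // mulr1; lra.
have hN : N = (S2 - S1) / (n.+2%:R * n.+1%:R).
  by rewrite E3 mulrC mulKf // mulf_neq0.
rewrite hN hS2 hS1 /ga.
field.
apply/and5P; split.
- by apply/lt0r_neq0; lra.
- by apply/lt0r_neq0.
- by apply/lt0r_neq0; lra.
- by apply/lt0r_neq0; lra.
- by apply/ltr0_neq0; lra.
Qed.

Lemma ff_ge0 (R : realFieldType) L (p : R) k :
  0 <= p -> p < 1 -> (k <= L)%N -> 0 <= ff L p k.
Proof.
move=> hp0 hp1 hk; rewrite /ff; apply: prodr_ge0 => j _.
have hj : (j < L)%N by apply: leq_trans (ltn_ord j) hk.
have hL : (0 < L)%N by lia.
have h1 : (L - j - 1 < L)%N by lia.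
by rewrite divr_ge0 // ltW // cc_pos.
Qed.

Lemma S0_pos (R : realFieldType) L (p : R) :
  0 <= p -> p < 1 -> 0 < \sum_(k < L.+1) nu L p k.
Proof.
move=> hp0 hp1; rewrite big_ord_recl.
have -> : nu L p 0 = 1 by rewrite /nu bin0 /ff big_ord0 mulr1.
have : 0 <= \sum_(i < L) nu L p (bump 0 i).
  by apply: sumr_ge0 => i _; rewrite mulr_ge0 ?ler0n // ff_ge0.
by move=> h; apply: lt_le_trans (ltr01) _; rewrite lerDl.
Qed.

Lemma E1_eq (R : realFieldType) L (p : R) :
  0 <= p -> p < 1 -> (0 < L)%N ->
  (1 - p) * L%:R * \sum_(k < L.+1) nu L p k
  + (-2 * (1 - p)) * \sum_(k < L.+1) nu L p k * k%:R
  + 0 * \sum_(k < L.+1) nu L p k * (k%:R ^+ 2) = 0.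
Proof.
move=> hp0 hp1 hL.
have hL' : L%:R != 0 :> R by rewrite pnatr_eq0 -lt0n.
rewrite -(@lin_sum _ L.+1 (nu L p) (fun k => k%:R) (fun k => k%:R ^+ 2)) -[RHS](rel L (fun k : nat => k%:R) hp0 hp1).
apply: eq_bigr => k _; congr (_ * _).
have hk : (k <= L)%N by rewrite -ltnS ltn_ord.
have hk1 : k%:R * (k%:R - k.-1%:R) = k%:R :> R.
  by case: (nat_of_ord k) => [|m]; rewrite ?mul0r //= -natr1 addrC addrK mulr1.
rewrite (_ : k%:R * cc L p (L - k) * (k%:R - k.-1%:R) = cc L p (L - k) * (k%:R * (k%:R - k.-1%:R))); last by ring.
rewrite hk1 -natr1 /cc natrB //; field; exact: hL'.
Qed.

Lemma E2_eq (R : realFieldType) L (p : R) :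
  0 <= p -> p < 1 -> (0 < L)%N ->
  (1 - p) * L%:R * \sum_(k < L.+1) nu L p k
  + 2 * ((1 - p) * L%:R - (1 - p) + p) * \sum_(k < L.+1) nu L p k * k%:R
  + ((2 * (1 - p) - 2 * p - 4 * (1 - p) * L%:R) / L%:R) * \sum_(k < L.+1) nu L p k * (k%:R ^+ 2) = 0.
Proof.
move=> hp0 hp1 hL.
have hL' : L%:R != 0 :> R by rewrite pnatr_eq0 -lt0n.
rewrite -(@lin_sum _ L.+1 (nu L p) (fun k => k%:R) (fun k => k%:R ^+ 2)) -[RHS](rel L (fun k : nat => k%:R ^+ 2) hp0 hp1).
apply: eq_bigr => k _; congr (_ * _).
have hk : (k <= L)%N by rewrite -ltnS ltn_ord.
have hk1 : k%:R * (k%:R ^+ 2 - k.-1%:R ^+ 2) = k%:R * (2 * k%:R - 1) :> R.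
  by case: (nat_of_ord k) => [|m]; rewrite ?mul0r //= -natr1; ring.
rewrite (_ : k%:R * cc L p (L - k) * (k%:R ^+ 2 - k.-1%:R ^+ 2) = cc L p (L - k) * (k%:R * (k%:R ^+ 2 - k.-1%:R ^+ 2))); last by ring.
rewrite hk1 -natr1 /cc natrB //; field; exact: hL'.
Qed.

Lemma S21 (R : realFieldType) n (p : R) :
  \sum_(k < n.+3) nu n.+2 p k * (k%:R ^+ 2) - \sum_(k < n.+3) nu n.+2 p k * k%:R =
  n.+2%:R * n.+1%:R * \sum_(k < n.+1) 'C(n, k)%:R * ff n.+2 p k.+2.
Proof.
rewrite -sumrB big_ord_recl big_ord_recl /bump /= mulr_sumr.
rewrite expr0n /= mulr0 subrr add0r expr1n mulr1 subrr add0r.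
apply: eq_bigr => i _; rewrite /bump /= !add1n.
have hb : ('C(n.+2, i.+2) * (i.+2 * i.+1) = n.+2 * n.+1 * 'C(n, i))%N.
  have h1 := mul_bin_diag n.+1 i; have h2 := mul_bin_diag n.+2 i.+1; rewrite /= in h1 h2.
  by rewrite -mulnA h1 [RHS]mulnCA h2 [in RHS]mulnC -mulnA mulnCA.
have hbR := congr1 (fun m => m%:R : R) hb; rewrite /= !natrM in hbR.
rewrite (_ : i.+2%:R = i.+1%:R + 1 :> R) in hbR *; last by rewrite natr1.
rewrite /nu; transitivity ('C(n.+2, i.+2)%:R * ((i.+1%:R + 1) * i.+1%:R) * ff n.+2 p i.+2).
  by ring.
by rewrite hbR; ring.
Qed.

Lemma corr_eq (R : realFieldType) n (p : R) :
  corr n.+2 p = (\sum_(k < n.+1) 'C(n, k)%:R * ff n.+2 p k.+2) / \sum_(k < n.+3) nu n.+2 p k.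
Proof.
rewrite /corr.
transitivity (\sum_(e : config n.+2) Defs.pi p e * (nat_of_bool (at_ e 0))%:R * (nat_of_bool (at_ e 1))%:R).
  apply: eq_bigr => e _; rewrite -(inner p e) mulr_sumr; apply: eq_bigr => w _; ring.
have hZ : \sum_(v : config n.+2) wt p v = \sum_(k < n.+3) nu n.+2 p k.
  by rewrite -(@count_ones _ n.+2 (ff n.+2 p)).
rewrite /Defs.pi hZ -(sum_pair n (fun k => ff n.+2 p k)) mulr_suml.
by apply: eq_bigr => e _; rewrite /wt /ff; ring.
Qed.

Theorem mainTheorem16 (R : realFieldType) (L : nat) (p : R)
  (hL : (2 <= L)%N) (hp0 : 0 <= p) (hp1 : p < 1) :
  corr L p - 1 / 4 =
  (2 * p - 1) / (4 * (2 * L%:R * (1 - p) + 2 * p - 1)).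
Proof.
case: L hL => [|[|n]] // _.
rewrite corr_eq.
apply: (final_alg hp0 hp1 (S0_pos n.+2 hp0 hp1) (E1_eq hp0 hp1 _) (E2_eq hp0 hp1 _) (S21 n p)) => //.
Qed.
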